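(* Let $z_1,z_2\in(0,1)$ and set $$\alpha_1=z_2\frac{1-z_1}{1+z_1},\qquad \alpha_2=\frac{1}{z_2}\frac{1-z_1}{1+z_1}.$$ Define, for $n\in\mathbb Z$, $$w_n=\int_{-\pi}^{\pi}\frac{d\theta}{2\pi}\,\frac{\left(1+\alpha_1\alpha_2-(\alpha_1+\alpha_2)\cos\theta\right)\cos(n\theta)-(\alpha_1-\alpha_2)\sin\theta\,\sin(n\theta)}{\sqrt{(1-2\alpha_1\cos\theta+\alpha_1^2)(1-2\alpha_2\cos\theta+\alpha_2^2)}},$$ the Fourier coefficients of the weight $w(\zeta)=\left[\frac{(1-\alpha_1\zeta)(1-\alpha_2\zeta^{-1})}{(1-\alpha_1\zeta^{-1})(1-\alpha_2\zeta)}\right]^{1/2}$ on $|\zeta|=1$ (these are the Toeplitz matrix elements whose $N\times N$ Toeplitz determinant gives the column correlation $\langle\sigma_{0,0}\sigma_{0,N}\rangle$ of the anisotropic square lattice Ising model). Then for every $n\in\mathbb Z$, \begin{multline*} 2\alpha_1\alpha_2(n-3)w_{n-3}-(1+\alpha_1\alpha_2)\left[(2n-5)\alpha_1+(2n-3)\alpha_2\right]w_{n-2}\\ +2\left[(n-2)\alpha_1^2+n\alpha_2^2+(n-1)(1+\alpha_1\alpha_2)^2\right]w_{n-1}\\ -(1+\alpha_1\alpha_2)\left[(2n-1)\alpha_1+(2n+1)\alpha_2\right]w_n+2\alpha_1\alpha_2(n+1)w_{n+1}=0 . \end{multline*}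
   Context: Here $z_i=\tanh K_i$ where $K_1,K_2$ are the horizontal and vertical couplings of the square lattice Ising model (ferromagnetic regime); the square root in the integrand is taken positive. *)

(* Defs.v *)
From Stdlib Require Import Reals ZArith.
From Coquelicot Require Import Coquelicot.
Open Scope R_scope.

Definition alpha1 (z1 z2 : R) : R := z2 * ((1 - z1) / (1 + z1)).
Definition alpha2 (z1 z2 : R) : R := (1 / z2) * ((1 - z1) / (1 + z1)).

Definition w_integrand (a1 a2 : R) (n : Z) (t : R) : R :=
  ((1 + a1 * a2 - (a1 + a2) * cos t) * cos (IZR n * t)
     - (a1 - a2) * sin t * sin (IZR n * t))
  / sqrt ((1 - 2 * a1 * cos t + a1 ^ 2) * (1 - 2 * a2 * cos t + a2 ^ 2)).

Definition w_coef (z1 z2 : R) (n : Z) : R :=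
  RInt (w_integrand (alpha1 z1 z2) (alpha2 z1 z2) n) (- PI) PI / (2 * PI).

(* Main.v *)
Require Import Defs.
From Stdlib Require Import Reals ZArith Lra Psatz.
From Coquelicot Require Import Coquelicot.
Open Scope R_scope.

Definition DD (a1 a2 t : R) := (1 - 2 * a1 * cos t + a1 ^ 2) * (1 - 2 * a2 * cos t + a2 ^ 2).
Definition GG (a1 a2 m t : R) :=
  -2 * sqrt (DD a1 a2 t) * ((1 + a1 * a2 - (a1 + a2) * cos t) * sin ((1 - m) * t)
    - (a1 - a2) * sin t * cos ((1-m) * t)).
Definition fr (a1 a2 k t : R) : R :=
  ((1 + a1 * a2 - (a1 + a2) * cos t) * cos (k * t)
     - (a1 - a2) * sin t * sin (k * t))
  / sqrt ((1 - 2 * a1 * cos t + a1 ^ 2) * (1 - 2 * a2 * cos t + a2 ^ 2)).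
Definition combo (a1 a2 m t : R) : R :=
  2 * a1 * a2 * (m - 3) * fr a1 a2 (m - 3) t
  - (1 + a1 * a2) * ((2 * m - 5) * a1 + (2 * m - 3) * a2) * fr a1 a2 (m-2) t
  + 2 * ((m - 2) * a1 ^ 2 + m * a2 ^ 2 + (m - 1) * (1 + a1 * a2) ^ 2) * fr a1 a2 (m-1) t
  - (1 + a1 * a2) * ((2 * m - 1) * a1 + (2 * m + 1) * a2) * fr a1 a2 m t
  + 2 * a1 * a2 * (m + 1) * fr a1 a2 (m+1) t.

Ltac circ s c H :=
  let h2 := fresh in let h3 := fresh in let h4 := fresh in let h5 := fresh in
  let h6 := fresh in let h7 := fresh in let h8 := fresh in
  assert (h2 : s ^ 2 = 1 - c^2) by (rewrite <- H; ring);
  assert (h3 : s ^ 3 = s * (1 - c^2)) by (rewrite <- H; ring);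
  assert (h4 : s ^ 4 = (1 - c^2)^2) by (rewrite <- H; ring);
  assert (h5 : s ^ 5 = s * (1 - c^2)^2) by (rewrite <- H; ring);
  assert (h6 : s ^ 6 = (1 - c^2)^3) by (rewrite <- H; ring);
  assert (h7 : s ^ 7 = s * (1 - c^2)^3) by (rewrite <- H; ring);
  assert (h8 : s ^ 8 = (1 - c^2)^4) by (rewrite <- H; ring);
  ring_simplify; rewrite ?h8, ?h7, ?h6, ?h5, ?h4, ?h3, ?h2; ring.

Lemma cos3 t : cos (3 * t) = 4 * cos t ^ 3 - 3 * cos t.
Proof. replace (3*t) with (2*t + t) by ring. rewrite cos_plus, cos_2a, sin_2a.
  pose proof (sin2_cos2 t). unfold Rsqr in H. circ (sin t) (cos t) H. Qed.
Lemma sin3 t : sin (3 * t) = 3 * sin t - 4 * sin t ^ 3.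
Proof. replace (3*t) with (2*t + t) by ring. rewrite sin_plus, cos_2a, sin_2a.
  pose proof (sin2_cos2 t). unfold Rsqr in H. circ (sin t) (cos t) H. Qed.

Lemma deriv_GG a1 a2 m t : 0 < DD a1 a2 t -> is_derive (GG a1 a2 m) t (combo a1 a2 m t).
Proof.
intros H. unfold GG, combo, fr, DD. auto_derive.
{ replace ((1 + - (2 * a1 * cos t) + a1 * (a1 * 1)) * (1 + - (2 * a2 * cos t) + a2 * (a2 * 1)))
  with (DD a1 a2 t) by (unfold DD; ring); exact H. }
replace ((1 + - (2 * a1 * cos t) + a1 * (a1 * 1)) * (1 + - (2 * a2 * cos t) + a2 * (a2 * 1)))
  with (DD a1 a2 t) by (unfold DD; ring).
replace ((1 - 2 * a1 * cos t + a1 ^ 2) * (1 - 2 * a2 * cos t + a2 ^ 2))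
  with (DD a1 a2 t) by (unfold DD; ring).
assert (Hr : sqrt (DD a1 a2 t) * sqrt (DD a1 a2 t) = DD a1 a2 t) by (apply sqrt_sqrt; lra).
assert (Hp : 0 < sqrt (DD a1 a2 t)) by (apply sqrt_lt_R0; lra).
replace ((m-3)*t) with (m*t - 3*t) by ring.
replace ((m-2)*t) with (m*t - 2*t) by ring.
replace ((m-1)*t) with (m*t - t) by ring.
replace ((m+1)*t) with (m*t + t) by ring.
replace ((1-m)*t) with (t - m*t) by ring.
rewrite !cos_minus, !sin_minus, cos_plus, sin_plus, cos3, sin3, cos_2a_cos, sin_2a.
unfold DD in *.
pose proof (sin2_cos2 t) as Hs. unfold Rsqr in Hs.
set (r := sqrt _) in *. clearbody r.
set (c := cos t) in *. set (s := sin t) in *.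
set (C := cos (m*t)) in *. set (S := sin (m*t)) in *.
clearbody c s C S.
field_simplify_eq; [| lra].
assert (Hr2 : r^2 = (1 - 2 * a1 * c + a1 ^ 2) * (1 - 2 * a2 * c + a2 ^ 2)) by (rewrite <- Hr; ring).
rewrite Hr2.
circ s c Hs.
Qed.

Lemma ftc_open (f g : R -> R) a b : a < b -> (forall x, continuous g x) ->
  (forall x, a <= x <= b -> continuous f x) ->
  (forall x, a < x < b -> is_derive f x (g x)) -> RInt g a b = f b - f a.
Proof.
intros hab hg hf hd.
assert (hex : forall y, ex_RInt g a y) by (intros y; apply (ex_RInt_continuous (V:=R_CompleteNormedModule)); intros; apply hg).
set (F := fun y => RInt g a y).
assert (hloc : forall x, locally x (fun y => is_RInt g a y (F y))).
{ intros x. apply filter_forall. intros y. exact (RInt_correct g a y (hex y)). }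
assert (hFd : forall x, is_derive F x (g x)).
{ intros x. apply is_derive_RInt with a; [apply hloc | apply hg]. }
assert (hFc : forall x, continuous F x).
{ intros x. apply continuous_RInt_1 with g a. apply hloc. }
destruct (MVT_gen (fun y => F y - f y) a b (fun _ => 0)) as [c [_ hc]].
- rewrite Rmin_left, Rmax_right by lra. intros x hx.
  replace 0 with (g x - g x) by ring. apply (is_derive_minus F f). apply hFd. apply hd, hx.
- rewrite Rmin_left, Rmax_right by lra. intros x hx. apply continuity_pt_filterlim.
  apply (continuous_minus F f). apply hFc. apply hf, hx.
- assert (F a = 0) by (unfold F; rewrite RInt_point; reflexivity).
  change (RInt g a b) with (F b). lra.
Qed.

Lemma sin_decomp_nat (k : nat) : exists u : R -> R,
  (forall t, ex_derive u t) /\ forall t, sin (INR k * t) = sin t * u t.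
Proof.
induction k as [|k [u [hu he]]].
- exists (fun _ => 0). split. intros; auto_derive; auto. intros; simpl. rewrite Rmult_0_l, sin_0; ring.
- exists (fun t => u t * cos t + cos (INR k * t)). split.
  + intros t. auto_derive. repeat split; auto.
  + intros t. rewrite S_INR. replace ((INR k + 1) * t) with (INR k * t + t) by ring.
    rewrite sin_plus, he. ring.
Qed.

Lemma sin_decomp (k : Z) : exists u : R -> R,
  (forall t, ex_derive u t) /\ forall t, sin (IZR k * t) = sin t * u t.
Proof.
destruct (Z_le_gt_dec 0 k) as [h|h].
- destruct (sin_decomp_nat (Z.to_nat k)) as [u [hu he]]. exists u. split; auto.
  intros t. rewrite <- he. rewrite INR_IZR_INZ, Z2Nat.id by lia. reflexivity.
- destruct (sin_decomp_nat (Z.to_nat (-k))) as [u [hu he]]. exists (fun t => - u t). split.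
  + intros t. auto_derive. auto.
  + intros t. replace (IZR k) with (- INR (Z.to_nat (-k))).
    * rewrite Ropp_mult_distr_l_reverse, sin_neg, he. ring.
    * rewrite INR_IZR_INZ, Z2Nat.id by lia. rewrite opp_IZR. ring.
Qed.

Lemma fac_eq a t : 1 - 2 * a * cos t + a ^ 2 = (1-a)*(1-a) + 2*(a*(1-cos t)).
Proof. ring. Qed.

Lemma fac_nonneg a t : 0 < a -> 0 <= 1 - 2 * a * cos t + a ^ 2.
Proof. intros. pose proof (COS_bound t). rewrite fac_eq.
  assert (0 <= a * (1 - cos t)) by (apply Rmult_le_pos; lra).
  pose proof (Rle_0_sqr (1-a)). unfold Rsqr in *. lra. Qed.

Lemma fac_pos a t : 0 < a -> a <> 1 -> 0 < 1 - 2 * a * cos t + a ^ 2.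
Proof. intros. pose proof (COS_bound t). rewrite fac_eq.
  assert (0 < (1-a)*(1-a)) by (apply Rsqr_pos_lt; lra).
  assert (0 <= a * (1 - cos t)) by (apply Rmult_le_pos; lra). lra. Qed.

Lemma fr_cont a1 a2 k t : 0 < a1 < 1 -> 0 < a2 -> continuous (fr a1 a2 (IZR k)) t.
Proof.
intros h1 h2.
destruct (Req_dec a2 1) as [e|ne].
- subst a2. destruct (sin_decomp k) as [u [hu he]].
  set (D1 := fun t => 1 - 2 * a1 * cos t + a1 ^ 2).
  assert (hD1 : forall t, 0 < D1 t) by (intros; apply fac_pos; lra).
  set (rep := fun t => sqrt (1 - cos t) * (((1 + a1) * cos (IZR k * t) - (a1 - 1) * (1 + cos t) * u t)
               / (sqrt 2 * sqrt (D1 t)))).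
  assert (Heq : forall x : R, rep x = fr a1 1 (IZR k) x).
  { intros x. unfold fr, rep. rewrite he.
    pose proof (COS_bound x). pose proof (sin2_cos2 x) as hs. unfold Rsqr in hs.
    pose proof (hD1 x) as hx. unfold D1 in *.
    replace ((1 - 2 * a1 * cos x + a1 ^ 2) * (1 - 2 * 1 * cos x + 1 ^ 2))
      with ((1 - 2 * a1 * cos x + a1 ^ 2) * (2 * (1 - cos x))) by ring.
    rewrite sqrt_mult by lra. rewrite (sqrt_mult 2) by lra.
    destruct (Req_dec (cos x) 1) as [ec|nc].
    * assert (hss : sin x * sin x = 0) by (rewrite ec in hs; lra).
      assert (hs0 : sin x = 0) by (destruct (Rmult_integral _ _ hss); auto).
      rewrite ec, hs0. replace (1 - 1) with 0 by ring. rewrite sqrt_0. unfold Rdiv. ring.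
    * assert (hc : 0 < 1 - cos x) by lra.
      pose proof (sqrt_lt_R0 _ hc). pose proof (sqrt_lt_R0 _ hx).
      assert (0 < sqrt 2) by (apply sqrt_lt_R0; lra).
      pose proof (sqrt_sqrt (1 - cos x) (Rlt_le _ _ hc)).
      assert (hq : sin x * sin x = (1 - cos x)*(1+cos x))
        by (replace ((1 - cos x)*(1+cos x)) with (1 - cos x * cos x) by ring; lra).
      replace ((a1 - 1) * sin x * (sin x * u x)) with ((a1-1)*(sin x * sin x) * u x) by ring.
      rewrite hq.
      field_simplify_eq; [|repeat split; lra].
      rewrite pow2_sqrt by lra. ring. }
  apply continuous_ext with rep; [exact Heq|]. unfold rep.
  + apply (continuous_mult (fun t => sqrt (1 - cos t))).
    * apply continuity_pt_filterlim.
      apply (continuity_pt_comp (fun t => 1 - cos t) sqrt).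
      -- apply continuity_pt_minus. apply continuity_pt_const. intros ??; auto.
         apply continuity_cos.
      -- apply continuity_pt_sqrt. pose proof (COS_bound t); lra.
    * apply (ex_derive_continuous (K:=R_AbsRing) (V:=R_NormedModule)). unfold D1. auto_derive.
      pose proof (hD1 t). unfold D1 in H.
      repeat split; auto.
      replace (1 + - (2 * a1 * cos t) + a1 * (a1 * 1)) with (1 - 2 * a1 * cos t + a1 ^ 2) by ring.
      apply Rmult_integral_contrapositive. split.
      ++ apply Rgt_not_eq, sqrt_lt_R0; lra.
      ++ apply Rgt_not_eq, sqrt_lt_R0; lra.
- apply (ex_derive_continuous (K:=R_AbsRing) (V:=R_NormedModule)). unfold fr. auto_derive.
  assert (0 < (1 - 2 * a1 * cos t + a1 ^ 2) * (1 - 2 * a2 * cos t + a2 ^ 2)).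
  { apply Rmult_lt_0_compat; apply fac_pos; lra. }
  replace ((1 + - (2 * a1 * cos t) + a1 * (a1 * 1)) * (1 + - (2 * a2 * cos t) + a2 * (a2 * 1)))
    with ((1 - 2 * a1 * cos t + a1 ^ 2) * (1 - 2 * a2 * cos t + a2 ^ 2)) by ring.
  repeat split; auto. apply Rgt_not_eq, sqrt_lt_R0; exact H.
Qed.

Lemma is_RInt_lin5 (f0 f1 f2 f3 f4 : R -> R) c0 c1 c2 c3 c4 a b I0 I1 I2 I3 I4 :
  is_RInt f0 a b I0 -> is_RInt f1 a b I1 -> is_RInt f2 a b I2 -> is_RInt f3 a b I3 ->
  is_RInt f4 a b I4 ->
  is_RInt (fun t => c0 * f0 t - c1 * f1 t + c2 * f2 t - c3 * f3 t + c4 * f4 t) a b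
    (c0 * I0 - c1 * I1 + c2 * I2 - c3 * I3 + c4 * I4).
Proof.
intros h0 h1 h2 h3 h4.
apply (is_RInt_plus (V:=R_NormedModule)); [|apply (is_RInt_scal (V:=R_NormedModule)); auto].
apply (is_RInt_minus (V:=R_NormedModule)); [|apply (is_RInt_scal (V:=R_NormedModule)); auto].
apply (is_RInt_plus (V:=R_NormedModule)); [|apply (is_RInt_scal (V:=R_NormedModule)); auto].
apply (is_RInt_minus (V:=R_NormedModule)); apply (is_RInt_scal (V:=R_NormedModule)); auto.
Qed.

Lemma cont_lin5 (f0 f1 f2 f3 f4 : R -> R) c0 c1 c2 c3 c4 x :
  continuous f0 x -> continuous f1 x -> continuous f2 x -> continuous f3 x ->
  continuous f4 x ->
  continuous (fun t => c0 * f0 t - c1 * f1 t + c2 * f2 t - c3 * f3 t + c4 * f4 t) x.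
Proof.
intros h0 h1 h2 h3 h4. apply continuity_pt_filterlim.
apply continuity_pt_filterlim in h0. apply continuity_pt_filterlim in h1.
apply continuity_pt_filterlim in h2. apply continuity_pt_filterlim in h3.
apply continuity_pt_filterlim in h4.
apply continuity_pt_plus; [|apply continuity_pt_scal; auto].
apply continuity_pt_minus; [|apply continuity_pt_scal; auto].
apply continuity_pt_plus; [|apply continuity_pt_scal; auto].
apply continuity_pt_minus; apply continuity_pt_scal; auto.
Qed.

Lemma exd_cpt (f : R -> R) x : ex_derive f x -> continuity_pt f x.
Proof. intros h. apply continuity_pt_filterlim.
  exact (ex_derive_continuous (K:=R_AbsRing) (V:=R_NormedModule) f x h). Qed.

Lemma GG_cont a1 a2 m x : 0 < a1 -> 0 < a2 -> continuous (GG a1 a2 m) x.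
Proof.
intros h1 h2. apply continuity_pt_filterlim. unfold GG.
apply (continuity_pt_mult (fun t => -2 * sqrt (DD a1 a2 t)) (fun t => (1 + a1*a2 - (a1+a2)*cos t) * sin((1-m)*t) - (a1-a2)*sin t * cos((1-m)*t))).
- apply (continuity_pt_scal (fun t => sqrt (DD a1 a2 t))).
  apply (continuity_pt_comp (DD a1 a2) sqrt).
  + apply continuity_pt_filterlim.
    apply (ex_derive_continuous (K:=R_AbsRing) (V:=R_NormedModule)).
    unfold DD. auto_derive. auto.
  + apply continuity_pt_sqrt. unfold DD.
    apply Rmult_le_pos; apply fac_nonneg; auto.
- apply (exd_cpt (fun t => (1 + a1*a2 - (a1+a2)*cos t) * sin((1-m)*t) - (a1-a2)*sin t * cos((1-m)*t))).
  auto_derive. auto.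
Qed.

Lemma DD_pos a1 a2 t : 0 < a1 -> 0 < a2 -> cos t < 1 -> 0 < DD a1 a2 t.
Proof.
intros h1 h2 hc. unfold DD. rewrite !fac_eq.
assert (0 < a1 * (1 - cos t)) by (apply Rmult_lt_0_compat; lra).
assert (0 < a2 * (1 - cos t)) by (apply Rmult_lt_0_compat; lra).
pose proof (Rle_0_sqr (1-a1)). pose proof (Rle_0_sqr (1-a2)). unfold Rsqr in *.
apply Rmult_lt_0_compat; lra.
Qed.

Lemma cos_lt_1_pos t : 0 < t < PI -> cos t < 1.
Proof.
intros h. pose proof (sin_gt_0 t (proj1 h) (proj2 h)). pose proof (COS_bound t).
pose proof (sin2_cos2 t). unfold Rsqr in *.
destruct (Req_dec (cos t) 1) as [e|e]; [|lra].
rewrite e in H1. assert (sin t * sin t = 0) by lra.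
destruct (Rmult_integral _ _ H2); lra.
Qed.

Lemma cos_lt_1 t : (0 < t < PI \/ - PI < t < 0) -> cos t < 1.
Proof.
intros [h|h]. apply cos_lt_1_pos; auto.
rewrite <- cos_neg. apply cos_lt_1_pos. lra.
Qed.

Lemma GG_PI a1 a2 n : GG a1 a2 (IZR n) PI - GG a1 a2 (IZR n) (- PI) = 0.
Proof.
unfold GG, DD. rewrite cos_neg, sin_neg, sin_PI.
replace ((1 - IZR n) * - PI) with (- ((1 - IZR n) * PI)) by ring.
rewrite sin_neg, cos_neg.
rewrite (sin_eq_0_1 ((1 - IZR n) * PI)).
- ring.
- exists (1 - n)%Z. rewrite minus_IZR. reflexivity.
Qed.

Lemma RInt_combo a1 a2 n : 0 < a1 < 1 -> 0 < a2 ->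
  RInt (combo a1 a2 (IZR n)) (- PI) PI = 0.
Proof.
intros h1 h2.
assert (hc : forall x, continuous (combo a1 a2 (IZR n)) x).
{ intros x. unfold combo.
  replace (IZR n - 3) with (IZR (n - 3)) by (rewrite minus_IZR; reflexivity).
  replace (IZR n - 2) with (IZR (n - 2)) by (rewrite minus_IZR; reflexivity).
  replace (IZR n - 1) with (IZR (n - 1)) by (rewrite minus_IZR; reflexivity).
  replace (IZR n + 1) with (IZR (n + 1)) by (rewrite plus_IZR; reflexivity).
  apply cont_lin5; apply fr_cont; auto. }
pose proof PI_RGT_0.
assert (hex : forall a b, ex_RInt (combo a1 a2 (IZR n)) a b).
{ intros a b. apply (ex_RInt_continuous (V:=R_CompleteNormedModule)); intros; apply hc. }
rewrite <- (RInt_Chasles _ (- PI) 0 PI) by apply hex.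
rewrite (ftc_open (GG a1 a2 (IZR n)) _ (- PI) 0), (ftc_open (GG a1 a2 (IZR n)) _ 0 PI).
- pose proof (GG_PI a1 a2 n). change (plus ?x ?y) with (x + y). lra.
- exact PI_RGT_0.
- exact hc.
- intros; apply GG_cont; lra.
- intros x hx. apply deriv_GG. apply DD_pos; try lra. apply cos_lt_1. lra.
- lra.
- exact hc.
- intros; apply GG_cont; lra.
- intros x hx. apply deriv_GG. apply DD_pos; try lra. apply cos_lt_1. lra.
Qed.

Theorem corollary5 (z1 z2 : R) (n : Z) :
  0 < z1 < 1 -> 0 < z2 < 1 ->
  let a1 := alpha1 z1 z2 in
  let a2 := alpha2 z1 z2 in
  let w := w_coef z1 z2 in
  let m := IZR n in
  2 * a1 * a2 * (m - 3) * w (n - 3)%Z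
  - (1 + a1 * a2) * ((2 * m - 5) * a1 + (2 * m - 3) * a2) * w (n - 2)%Z
  + 2 * ((m - 2) * a1 ^ 2 + m * a2 ^ 2 + (m - 1) * (1 + a1 * a2) ^ 2) * w (n - 1)%Z
  - (1 + a1 * a2) * ((2 * m - 1) * a1 + (2 * m + 1) * a2) * w n
  + 2 * a1 * a2 * (m + 1) * w (n + 1)%Z = 0.
Proof.
intros hz1 hz2 a1 a2 w m.
assert (hu : 0 < (1 - z1) / (1 + z1) < 1).
{ split. apply Rdiv_lt_0_compat; lra.
  apply (Rmult_lt_reg_r (1 + z1)); [lra|]. unfold Rdiv. rewrite Rmult_assoc, Rinv_l by lra. lra. }
assert (ha1 : 0 < a1 < 1).
{ unfold a1, alpha1. split. apply Rmult_lt_0_compat; lra.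
  assert (z2 * ((1 - z1) / (1 + z1)) < 1 * 1) by (apply Rmult_le_0_lt_compat; lra). lra. }
assert (ha2 : 0 < a2).
{ unfold a2, alpha2. apply Rmult_lt_0_compat; [|lra]. apply Rdiv_lt_0_compat; lra. }
assert (hw : forall k, w k = RInt (fr a1 a2 (IZR k)) (- PI) PI / (2 * PI)) by (intros; reflexivity).
rewrite !hw.
replace (IZR (n - 3)) with (m - 3) by (rewrite minus_IZR; reflexivity).
replace (IZR (n - 2)) with (m - 2) by (rewrite minus_IZR; reflexivity).
replace (IZR (n - 1)) with (m - 1) by (rewrite minus_IZR; reflexivity).
replace (IZR (n + 1)) with (m + 1) by (rewrite plus_IZR; reflexivity).
fold m.
assert (hex : forall k, ex_RInt (fr a1 a2 (IZR k)) (- PI) PI).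
{ intros k. apply (ex_RInt_continuous (V:=R_CompleteNormedModule)); intros; apply fr_cont; auto. }
assert (e3 : ex_RInt (fr a1 a2 (m - 3)) (- PI) PI)
  by (replace (m - 3) with (IZR (n - 3)) by (rewrite minus_IZR; reflexivity); apply hex).
assert (e2 : ex_RInt (fr a1 a2 (m - 2)) (- PI) PI)
  by (replace (m - 2) with (IZR (n - 2)) by (rewrite minus_IZR; reflexivity); apply hex).
assert (e1 : ex_RInt (fr a1 a2 (m - 1)) (- PI) PI)
  by (replace (m - 1) with (IZR (n - 1)) by (rewrite minus_IZR; reflexivity); apply hex).
assert (e0 : ex_RInt (fr a1 a2 m) (- PI) PI) by apply hex.
assert (e4 : ex_RInt (fr a1 a2 (m + 1)) (- PI) PI)
  by (replace (m + 1) with (IZR (n + 1)) by (rewrite plus_IZR; reflexivity); apply hex).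
assert (hlin := is_RInt_lin5 (fr a1 a2 (m - 3)) (fr a1 a2 (m - 2)) (fr a1 a2 (m - 1))
   (fr a1 a2 m) (fr a1 a2 (m + 1))
   (2 * a1 * a2 * (m - 3)) ((1 + a1 * a2) * ((2 * m - 5) * a1 + (2 * m - 3) * a2))
   (2 * ((m - 2) * a1 ^ 2 + m * a2 ^ 2 + (m - 1) * (1 + a1 * a2) ^ 2))
   ((1 + a1 * a2) * ((2 * m - 1) * a1 + (2 * m + 1) * a2)) (2 * a1 * a2 * (m + 1))
   (- PI) PI _ _ _ _ _
   (RInt_correct _ _ _ e3) (RInt_correct _ _ _ e2)
   (RInt_correct _ _ _ e1) (RInt_correct _ _ _ e0)
   (RInt_correct _ _ _ e4)).
apply (is_RInt_unique (V:=R_CompleteNormedModule)) in hlin.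
change (fun t => _) with (combo a1 a2 m) in hlin.
pose proof (RInt_combo a1 a2 n ha1 ha2) as hcb. change (IZR n) with m in hcb.
rewrite hcb in hlin.
pose proof PI_RGT_0.
unfold Rdiv. 
match goal with |- ?L = 0 => replace L with (/ (2 * PI) * (2 * a1 * a2 * (m - 3) * RInt (fr a1 a2 (m - 3)) (- PI) PI -
      (1 + a1 * a2) * ((2 * m - 5) * a1 + (2 * m - 3) * a2) * RInt (fr a1 a2 (m - 2)) (- PI) PI +
      2 * ((m - 2) * a1 ^ 2 + m * a2 ^ 2 + (m - 1) * (1 + a1 * a2) ^ 2) *
      RInt (fr a1 a2 (m - 1)) (- PI) PI -
      (1 + a1 * a2) * ((2 * m - 1) * a1 + (2 * m + 1) * a2) * RInt (fr a1 a2 m) (- PI) PI +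
      2 * a1 * a2 * (m + 1) * RInt (fr a1 a2 (m + 1)) (- PI) PI)) by ring end.
rewrite <- hlin. ring.
Qed.
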